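(* Let $n\geq 3$ and let $R\cong\prod_{i=1}^n F_i$, where each $F_i$ is a finite field. Then $\operatorname{sdim}_M(\Gamma^c(R))=|Z^*(R)|-2^{n-1}+1$.
   Context: $Z^*(R)$ is the set of nonzero zero-divisors of $R$. $\Gamma^c(R)$ is the complement of the zero-divisor graph: vertex set $Z^*(R)$, distinct $x,y$ adjacent iff $xy\neq 0$. For a connected graph $G$, a vertex $w$ strongly resolves $u,v$ if some shortest $u$–$w$ path contains $v$ or some shortest $v$–$w$ path contains $u$; $\operatorname{sdim}_M(G)$ is the minimum size of a set $W$ such that every pair of distinct vertices is strongly resolved by some vertex of $W$. *)

(* Defs.v *)
From mathcomp Require Import all_boot all_order all_algebra.
Set Implicit Arguments. Unset Strict Implicit. Unset Printing Implicit Defensive.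
Import GRing.Theory.
Local Open Scope ring_scope.

(** * Generic simple graphs given by a vertex set V and an adjacency relation e
    on a finite ambient type T (only the restriction of e to V matters). *)
Section Graphs.
Variables (T : finType) (V : {set T}) (e : rel T).

(** [s] is (the tail of) a walk in the graph from [x] to [y]:
    x :: s is a sequence of vertices of V, consecutive ones adjacent. *)
Definition gwalk (x y : T) (s : seq T) : Prop :=
  [/\ all (fun z => z \in V) (x :: s), path e x s & last x s = y].

Definition shortest_path (x y : T) (s : seq T) : Prop :=
  gwalk x y s /\ forall s', gwalk x y s' -> (size s <= size s')%N.

Definition strongly_resolves (w u v : T) : Prop :=
  (exists s, shortest_path u w s /\ v \in u :: s) \/
  (exists s, shortest_path v w s /\ u \in v :: s).

Definition strong_resolving_set (W : {set T}) : Prop :=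
  W \subset V /\
  forall u v, u \in V -> v \in V -> u != v ->
    exists2 w, w \in W & strongly_resolves w u v.

Definition is_sdimM (k : nat) : Prop :=
  (exists2 W, strong_resolving_set W & #|W| = k) /\
  (forall W, strong_resolving_set W -> (k <= #|W|)%N).
End Graphs.

Definition zstar (R : finComNzRingType) : {set R} :=
  [set x : R | (x != 0) && [exists y : R, (y != 0) && (x * y == 0)]].

(** Adjacency of the complement of the zero-divisor graph Γ^c(R):
    distinct x, y with xy ≠ 0 (vertex set Z*(R)). *)
Definition gammac_adj (R : finComNzRingType) : rel R :=
  fun x y => (x != y) && (x * y != 0).

(* Main.v *)
Require Import Defs.
From mathcomp Require Import all_boot all_order all_algebra all_field.
From mathcomp Require Import zify.
From Stdlib Require Import FunctionalExtensionality.
Import GRing.Theory.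
Local Open Scope ring_scope.

Section S.
Variables (n : nat) (R : finComNzRingType) (F : 'I_n -> finFieldType)
  (f : R -> forall i : 'I_n, F i) (g : (forall i : 'I_n, F i) -> R).
Hypothesis hn : (3 <= n)%N.
Hypothesis fK : cancel f g.
Hypothesis gK : cancel g f.
Hypothesis hadd : forall x y i, f (x + y) i = f x i + f y i.
Hypothesis hmul : forall x y i, f (x * y) i = f x i * f y i.

Lemma f0 i : f 0 i = 0.
Proof.
have := hadd 0 0 i; rewrite addr0 => h.
by apply/eqP; rewrite -(subrr (f 0 i)) {2}h addrK.
Qed.

Lemma feq x y : (forall i, f x i = f y i) -> x = y.
Proof. by move=> h; apply: (can_inj fK); apply: functional_extensionality_dep. Qed.

Definition supp (x : R) : {set 'I_n} := [set i | f x i != 0].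

Lemma in_supp x i : (i \in supp x) = (f x i != 0).
Proof. by rewrite inE. Qed.

Lemma eq0_supp x : (x == 0) = (supp x == set0).
Proof.
apply/eqP/eqP => [->|h].
  by apply/setP => i; rewrite in_supp inE f0 eqxx.
apply: feq => i; rewrite f0.
have : i \notin supp x by rewrite h inE.
by rewrite in_supp negbK => /eqP.
Qed.

Lemma mul_supp x y : supp (x * y) = supp x :&: supp y.
Proof. by apply/setP => i; rewrite !inE hmul mulf_eq0 negb_or. Qed.

Definition ind (S : {set 'I_n}) : forall i, F i := fun i => if i \in S then 1 else 0.
Definition elt S := g (ind S).

Lemma supp_elt S : supp (elt S) = S.
Proof.
apply/setP => i; rewrite in_supp /elt gK /ind.
by case: (i \in S); rewrite ?oner_eq0 ?eqxx.
Qed.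

Lemma elt_inj : injective elt.
Proof. exact: (can_inj supp_elt). Qed.

Local Notation V := (zstar R).
Local Notation e := (@gammac_adj R).

Lemma zstarP x : (x \in V) = (supp x != set0) && (supp x != setT).
Proof.
rewrite inE eq0_supp; apply/andP/andP => [[nz /existsP [y /andP [ynz /eqP xy0]]]|[nz nT]].
  split => //; apply/negP => /eqP sT.
  have : supp (x * y) == set0 by rewrite -eq0_supp xy0.
  by rewrite mul_supp sT setTI -eq0_supp (negbTE ynz).
split => //.
move: nT; rewrite eqEsubset subsetT /= => /subsetPn [j _ jn].
apply/existsP; exists (elt [set j]).
rewrite !eq0_supp mul_supp supp_elt.
apply/andP; split; first by apply/set0Pn; exists j; rewrite inE.
apply/eqP/setP => i; rewrite !inE; case: (eqVneq i j) => [->|]; last by rewrite andbF.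
by rewrite andbT; move: jn; rewrite in_supp => /negbTE ->.
Qed.

Lemma adjE x y : e x y = (x != y) && (supp x :&: supp y != set0).
Proof. by rewrite /gammac_adj eq0_supp mul_supp. Qed.

Lemma walk_lb u w s : gwalk V e u w s -> u != w -> ~~ e u w -> (2 <= size s)%N.
Proof.
case=> _ p l uw nuw; case: s p l => [|a [|b s]] //= p l.
  by rewrite l eqxx in uw.
by move: p; rewrite andbT l (negbTE nuw).
Qed.

Lemma exists_short u w : u \in V -> w \in V ->
  exists s, shortest_path V e u w s /\ (size s <= 2)%N.
Proof.
move=> uV wV.
have [<-|uw] := eqVneq u w.
  by exists [::]; split => //; split => //; split => //=; rewrite uV.
have [euw|neuw] := boolP (e u w).
  exists [:: w]; split => //; split.
    by split => //=; rewrite ?uV ?wV ?euw.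
  case=> [|a s'] //; case=> _ _ /= l; by rewrite l eqxx in uw.
move: (uV) (wV); rewrite !zstarP => /andP [/set0Pn [i iu] _] /andP [/set0Pn [j jw] _].
have dis : supp u :&: supp w == set0 by move: neuw; rewrite adjE uw /= negbK.
have ij : i != j.
  apply/eqP => ij; subst j; move/eqP: dis => /setP /(_ i); by rewrite !(in_setI, in_set0) iu jw.
set z := elt [set i; j].
have zV : z \in V.
  rewrite zstarP supp_elt; apply/andP; split.
    by apply/set0Pn; exists i; rewrite !(in_set1, in_set2) eqxx.
  apply/negP => /eqP hT.
  have := cards2 i j; rewrite hT cardsT card_ord ij => h; lia.
have uz : e u z.
  rewrite adjE supp_elt; apply/andP; split.
    apply/negP => /eqP uz; move: dis; rewrite uz supp_elt => /eqP /setP /(_ j).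
    by rewrite !(in_setI, in_set1, in_set2, in_set0) eqxx orbT jw.
  by apply/set0Pn; exists i; rewrite !(in_setI, in_set1, in_set2, in_set0) iu eqxx.
have zw : e z w.
  rewrite adjE supp_elt; apply/andP; split.
    apply/negP => /eqP zw; move: dis; rewrite -zw supp_elt => /eqP /setP /(_ i).
    by rewrite !(in_setI, in_set1, in_set2, in_set0) eqxx iu.
  by apply/set0Pn; exists j; rewrite !(in_setI, in_set1, in_set2, in_set0) jw eqxx orbT.
exists [:: z; w]; split => //; split.
  by split => //=; rewrite ?uV ?zV ?wV ?uz ?zw.
by move=> s' /walk_lb; apply.
Qed.

Lemma exists_walk2 u w : u \in V -> w \in V ->
  exists s, gwalk V e u w s /\ (size s <= 2)%N.
Proof. by move=> uV wV; have [s [[ws _] ss]] := exists_short _ _ uV wV; exists s. Qed.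

Lemma third u v w s : u \in V -> v \in V -> w \in V -> u != v -> w != u -> w != v ->
  shortest_path V e u w s -> v \in u :: s ->
  [/\ e u v, e v w & ~~ e u w].
Proof.
move=> uV vV wV uv wu wv [ws smin] vin.
have [s' [ws' ss']] := exists_walk2 _ _ uV wV.
have ss := leq_trans (smin _ ws') ss'.
move: vin; rewrite inE eq_sym (negbTE uv) /=.
move: ws ss smin; case: s => [|a [|b [|c s]]] // [al p l] _ smin vin.
  by move: vin; rewrite /= in l; rewrite l mem_seq1 => /eqP vw; rewrite vw eqxx in wv.
move: l p vin => /= -> /and3P [ua aw _].
rewrite !inE [v == w]eq_sym (negbTE wv) orbF => /eqP va; subst a.
split => //; apply/negP => euw.
have h : gwalk V e u w [:: w].
  by split => //=; rewrite ?euw ?uV ?wV.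
by have := smin _ h.
Qed.

Lemma third_supp u v w s : u \in V -> v \in V -> w \in V -> u != v -> w != u -> w != v ->
  shortest_path V e u w s -> v \in u :: s ->
  supp u :&: supp v != set0 /\ supp u != supp v.
Proof.
move=> uV vV wV uv wu wv sp vin.
have [euv evw neuw] := third _ _ _ _ uV vV wV uv wu wv sp vin.
move: euv evw neuw; rewrite !adjE uv /= => -> /andP [_ h].
rewrite eq_sym wu /= negbK => /eqP h2; split => //.
by apply/eqP => huv; move: h; rewrite -huv h2 eqxx.
Qed.

Lemma fam_bound (Fam : {set {set 'I_n}}) :
  (forall A B, A \in Fam -> B \in Fam -> A :&: B != set0) -> setT \notin Fam ->
  (#|Fam|.+1 <= 2 ^ n.-1)%N.
Proof.
move=> hI hT.
set C := [set ~: A | A in Fam].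
have cC : #|C| = #|Fam| by apply: card_imset; exact: setC_inj.
have d1 : Fam :&: C = set0.
  apply/setP => X; rewrite in_setI in_set0; apply/negP => /andP [XF /imsetP [B BF XB]].
  by have := hI _ _ XF BF; rewrite XB setIC setICr eqxx.
have n0 : (0 < n)%N by lia.
have s0T : (set0 : {set 'I_n}) != setT.
  apply/negP => /eqP h; have := cards0 'I_n; rewrite h cardsT card_ord; lia.
set P := [set (set0 : {set 'I_n}); setT].
have d2 : (Fam :|: C) :&: P = set0.
  apply/setP => X; rewrite in_setI in_set0 in_setU !in_set2.
  apply/negP => /andP [/orP [XF|/imsetP [B BF XB]] /orP [/eqP X0|/eqP XT]].
  - by have := hI _ _ XF XF; rewrite setIid X0 eqxx.
  - by move: XF; rewrite XT (negbTE hT).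
  - have : B = setT by apply: setC_inj; rewrite -XB X0 setCT.
    by move=> BT; rewrite -BT BF in hT.
  - have : B = set0 by apply: setC_inj; rewrite -XB XT setC0.
    by move=> B0; have := hI _ _ BF BF; rewrite setIid B0 eqxx.
have cU := cardsU (Fam :|: C) P. rewrite d2 cards0 subn0 in cU.
move: cU; rewrite (cardsU Fam C) d1 cards0 subn0 => cU.
have : (#|Fam :|: C :|: P| <= 2 ^ n)%N.
  have -> : (2 ^ n)%N = #|[set: {set 'I_n}]| by rewrite -powersetT card_powerset cardsT card_ord.
  exact: subset_leq_card (subsetT _).
rewrite cU cC cards2 s0T.
have e2 : (2 ^ n = 2 * 2 ^ n.-1)%N by rewrite -expnS prednK.
move: e2; lia.
Qed.

Definition i0 : 'I_n := Ordinal (leq_trans (isT : 0 < 3)%N hn).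
Definition i1 : 'I_n := Ordinal (leq_trans (isT : 1 < 3)%N hn).
Definition Fam0 := [set S : {set 'I_n} | (i0 \in S) && (S != setT)].
Definition K := [set elt S | S in Fam0].

Lemma card_Fam0 : #|Fam0| = (2 ^ n.-1 - 1)%N.
Proof.
set A0 := [set S : {set 'I_n} | i0 \in S].
have hC : [set ~: S | S in A0] = ~: A0.
  apply/setP => X; rewrite in_setC inE; apply/imsetP/idP => [[S SA ->]|XnA].
    by move: SA; rewrite !inE => ->.
  by exists (~: X); rewrite ?setCK // inE in_setC.
have cC : #|~: A0| = #|A0| by rewrite -hC; apply: card_imset; exact: setC_inj.
have := cardsC A0; rewrite cC.
have -> : #|{set 'I_n}| = (2 ^ n)%N.
  by rewrite -cardsT -powersetT card_powerset cardsT card_ord.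
have e2 : (2 ^ n = 2 * 2 ^ n.-1)%N by rewrite -expnS prednK // (leq_trans _ hn).
have -> : Fam0 = A0 :\ setT by apply/setP => X; rewrite !inE andbC.
have := cardsD1 setT A0; rewrite inE in_setT /=.
move: e2; move: (2 ^ n.-1)%N (2 ^ n)%N => k m; lia.
Qed.

Lemma KV : K \subset V.
Proof.
apply/subsetP => x /imsetP [S]; rewrite inE => /andP [iS ST] ->.
rewrite zstarP supp_elt ST andbT; by apply/set0Pn; exists i0.
Qed.

Lemma cardK : #|K| = (2 ^ n.-1 - 1)%N.
Proof. by rewrite card_imset ?card_Fam0 //; exact: elt_inj. Qed.

Lemma cardV : (2 ^ n.-1 <= #|V|)%N.
Proof.
have i01 : i0 != i1 by [].
have xV : elt [set i1] \in V.
  rewrite zstarP supp_elt; apply/andP; split; first by apply/set0Pn; exists i1; rewrite in_set1.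
  apply/negP => /eqP h; have : i0 \in [set i1] by rewrite h in_setT.
  by rewrite in_set1 (negbTE i01).
have xK : elt [set i1] \notin K.
  apply/imsetP => [[S]]; rewrite inE => /andP [iS _] /elt_inj h.
  by move: iS; rewrite -h in_set1 (negbTE i01).
have : (#|K| < #|V|)%N.
  apply: proper_card; apply/properP; split; first exact: KV.
  by exists (elt [set i1]).
rewrite cardK; have : (0 < 2 ^ n.-1)%N by rewrite expn_gt0.
move: (2 ^ n.-1)%N => k; lia.
Qed.

Lemma lower W : strong_resolving_set V e W -> (#|V| - 2 ^ n.-1 + 1 <= #|W|)%N.
Proof.
case=> sWV hres; set U := V :\: W.
have key u v : u \in U -> v \in U -> u != v ->
    supp u :&: supp v != set0 /\ supp u != supp v.
  rewrite !in_setD => /andP [uW uV] /andP [vW vV] uv.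
  have [w wW r] := hres u v uV vV uv.
  have wu : w != u by apply: contraNneq uW => <-.
  have wv : w != v by apply: contraNneq vW => <-.
  have wV : w \in V by apply: (subsetP sWV).
  case: r => [[s [sp vin]]|[s [sp uin]]]; first exact: (third_supp _ _ _ _ uV vV wV uv wu wv sp vin).
  have vu : v != u by rewrite eq_sym.
  have [h1 h2] := third_supp _ _ _ _ vV uV wV vu wv wu sp uin.
  by split; [rewrite setIC | rewrite eq_sym].
have inj : {in U &, injective supp}.
  move=> u v uU vU h; apply/eqP; apply: contraT => uv.
  by have [_] := key u v uU vU uv; rewrite h eqxx.
have cardU : #|supp @: U| = #|U| := card_in_imset inj.
have fb := fam_bound (supp @: U).
have h : (#|supp @: U|.+1 <= 2 ^ n.-1)%N.
  apply: fb.
    move=> A B /imsetP [u uU ->] /imsetP [v vU ->].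
    have [<-|uv] := eqVneq u v; last by case: (key u v uU vU uv).
    by move: uU; rewrite in_setD zstarP setIid => /andP [_ /andP [] //].
  apply/imsetP => [[u uU uT]]; move: uU; rewrite in_setD zstarP -uT eqxx.
  by rewrite !andbF.
move: h; rewrite cardU cardsDS // => h.
have := subset_leq_card sWV; have := cardV; move: h; move: (2 ^ n.-1)%N => k; lia.
Qed.

Lemma self_res u v : u \in V -> v \in V ->
  strongly_resolves V e v u v /\ strongly_resolves V e u u v.
Proof.
move=> uV vV; split.
  have [s [sp _]] := exists_short _ _ uV vV; left; exists s; split => //.
  by case: sp => [[_ _ l] _]; rewrite -l mem_last.
have [s [sp _]] := exists_short _ _ vV uV; right; exists s; split => //.
by case: sp => [[_ _ l] _]; rewrite -l mem_last.
Qed.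

Lemma mid a b w : a \in V -> b \in V -> w \in V -> a != b ->
  supp a :&: supp b != set0 -> supp a :&: supp w != set0 ->
  supp b :&: supp w == set0 -> a != w -> shortest_path V e b w [:: a; w].
Proof.
move=> aV bV wV ab hab haw hbw aw.
have bw : b != w.
  apply/negP => /eqP bw; move: hbw; rewrite bw setIid => h.
  by move: wV; rewrite zstarP h.
split.
  split => //=; first by rewrite aV bV wV.
  by rewrite !adjE eq_sym ab aw setIC hab haw.
move=> s' ws'; apply: (walk_lb _ _ _ ws' bw); by rewrite adjE hbw andbF.
Qed.

Lemma helper S T i : S \in Fam0 -> T \in Fam0 -> i \in S -> i \notin T ->
  elt [set i] \in V :\: K /\
  shortest_path V e (elt T) (elt [set i]) [:: elt S; elt [set i]].
Proof.
move=> SF TF iS iT.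
have /andP [i0S SnT] : (i0 \in S) && (S != setT) by rewrite inE in SF.
have /andP [i0T TnT] : (i0 \in T) && (T != setT) by rewrite inE in TF.
have ii0 : i0 != i by apply: contraNneq iT => <-.
have wV : elt [set i] \in V.
  rewrite zstarP supp_elt; apply/andP; split; first by apply/set0Pn; exists i; rewrite in_set1.
  apply/negP => /eqP h; have : i0 \in [set i] by rewrite h in_setT.
  by rewrite in_set1 (negbTE ii0).
have SV : elt S \in V by apply: (subsetP KV); apply/imsetP; exists S; rewrite // inE i0S.
have TV : elt T \in V by apply: (subsetP KV); apply/imsetP; exists T; rewrite // inE i0T.
split.
  rewrite in_setD wV andbT; apply/imsetP => [[S']]; rewrite inE => /andP [iS' _] /elt_inj h.
  by move: iS'; rewrite -h in_set1 (negbTE ii0).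
apply: mid => //; rewrite ?supp_elt.
- by apply: contraNneq iT => /elt_inj <-.
- by apply/set0Pn; exists i0; rewrite in_setI i0S.
- by apply/set0Pn; exists i; rewrite in_setI iS in_set1 eqxx.
- apply/eqP/setP => j; rewrite in_setI in_set1 in_set0.
  by case: (eqVneq j i) => [->|]; rewrite ?(negbTE iT) ?andbF.
- apply: contraNneq ii0 => h; have : i0 \in supp (elt S) by rewrite supp_elt.
  by rewrite h supp_elt in_set1 eq_sym.
Qed.

Lemma main : is_sdimM V e (#|V| - 2 ^ n.-1 + 1).
Proof.
split; last by move=> W; apply: lower.
exists (V :\: K); last first.
  rewrite cardsDS ?KV // cardK; have := cardV; have : (0 < 2 ^ n.-1)%N by rewrite expn_gt0.
  move: (2 ^ n.-1)%N => k; lia.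
split; first exact: subsetDl.
move=> u v uV vV uv.
case: (boolP (u \in K)) => uK; last first.
  by exists u; [rewrite in_setD uK uV | exact: (self_res _ _ uV vV).2].
case: (boolP (v \in K)) => vK; last first.
  by exists v; [rewrite in_setD vK vV | exact: (self_res _ _ uV vV).1].
have [S SF uS] := imsetP uK; have [T TF vT] := imsetP vK; subst u v.
have ST : S != T by apply: contraNneq uv => ->.
move: ST; rewrite eqEsubset negb_and => /orP [/subsetPn [i iS iT]|/subsetPn [i iT iS]].
- have [wW sp] := helper _ _ _ SF TF iS iT; exists (elt [set i]) => //.
  by right; exists [:: elt S; elt [set i]]; split => //; rewrite !inE eqxx orbT.
- have [wW sp] := helper _ _ _ TF SF iT iS; exists (elt [set i]) => //.
  by left; exists [:: elt T; elt [set i]]; split => //; rewrite !inE eqxx orbT.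
Qed.
End S.


Theorem theorem4p11 (n : nat) (R : finComNzRingType)
  (F : 'I_n -> finFieldType) (f : R -> forall i : 'I_n, F i) :
  (3 <= n)%N ->
  bijective f ->
  (forall x y i, f (x + y) i = f x i + f y i) ->
  (forall x y i, f (x * y) i = f x i * f y i) ->
  (forall i, f 1 i = 1) ->
  is_sdimM (zstar R) (@gammac_adj R) (#|zstar R| - 2 ^ n.-1 + 1)%N.
Proof.
move=> hn [g fK gK] hadd hmul _.
exact: (@main n R F f g hn fK gK hadd hmul).
Qed.
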